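(* Let $\mathcal{Y}$ be a family of metric spaces with uniform asymptotic property C. If $\mathcal{X}$ is a family of metric spaces such that $\mathcal{X}$ is uniformly $R$-decomposable over $\mathcal{Y}$ for every sequence $R\in\mathbb{R}^{\mathbb{N}}$ (with the same $\mathcal{Y}$ for all $R$), then $\mathcal{X}$ has uniform asymptotic property C.
   Context: A family $\mathcal{U}$ of metric subspaces of a metric space $(X,d)$ is $r$-disjoint if $d(x,y)>r$ whenever $x\in U$, $y\in U'$ and $U\neq U'$ are elements of $\mathcal{U}$. For families $\mathcal{X},\mathcal{Y}$ of metric spaces and $R=(R_1,R_2,\dots)\in\mathbb{R}^{\mathbb{N}}$, $\mathcal{X}$ is uniformly $R$-decomposable over $\mathcal{Y}$ (written $\mathcal{X}\xrightarrow{R}\mathcal{Y}$) if there is an integer $k$ such that for each $X\in\mathcal{X}$ there exist subcollections $\mathcal{U}_1,\dots,\mathcal{U}_k\subseteq\mathcal{Y}$, consisting of subspaces of $X$ with the induced metric, such that each $\mathcal{U}_i$ is $R_i$-disjoint and $\bigcup_i\mathcal{U}_i$ covers $X$. A family $\mathcal{B}$ of metric spaces is bounded if there is $D>0$ with $\operatorname{diam}(B)<D$ for all $B\in\mathcal{B}$. A family $\mathcal{X}$ has uniform asymptotic property C if for each $R\in\mathbb{R}^{\mathbb{N}}$ there exists a bounded family $\mathcal{Y}_R$ with $\mathcal{X}\xrightarrow{R}\mathcal{Y}_R$. *)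

(* Defs.v *)
From HB Require Import structures.
From mathcomp Require Import all_boot all_order all_algebra.
From mathcomp Require Import all_classical all_reals all_analysis.
Set Implicit Arguments. Unset Strict Implicit. Unset Printing Implicit Defensive.
Import Order.TTheory GRing.Theory Num.Theory.
Local Open Scope classical_set_scope.
Local Open Scope ring_scope.

Record metricSpace (R : realType) := MetricSpace {
  carrier :> Type;
  dist : carrier -> carrier -> R;
  dist_ge0 : forall x y, 0 <= dist x y;
  dist_eq0 : forall x y, dist x y = 0 <-> x = y;
  dist_sym : forall x y, dist x y = dist y x;
  dist_triangle : forall x y z, dist x z <= dist x y + dist y z }.

Arguments dist {R} m _ _.

Definition mfamily (R : realType) := metricSpace R -> Prop.

Section Subspace.
Variables (R : realType) (X : metricSpace R) (A : set X).

Definition sub_carrier := {x : X | A x}.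
Definition sub_dist (x y : sub_carrier) : R := dist X (proj1_sig x) (proj1_sig y).

Lemma sub_dist_ge0 x y : 0 <= sub_dist x y.
Proof. exact: dist_ge0. Qed.

Lemma sub_dist_eq0 x y : sub_dist x y = 0 <-> x = y.
Proof.
split; last by move=> ->; apply/dist_eq0.
case: x y => [x Ax] [y Ay] /dist_eq0 /= exy; subst y.
by rewrite (Prop_irrelevance Ax Ay).
Qed.

Lemma sub_dist_sym x y : sub_dist x y = sub_dist y x.
Proof. exact: dist_sym. Qed.

Lemma sub_dist_triangle x y z : sub_dist x z <= sub_dist x y + sub_dist y z.
Proof. exact: dist_triangle. Qed.

Definition subspace : metricSpace R :=
  MetricSpace sub_dist_ge0 sub_dist_eq0 sub_dist_sym sub_dist_triangle.
End Subspace.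

(* diam(B) as an extended real: sup of distances (+oo if unbounded, -oo if empty). *)
Definition diam (R : realType) (B : metricSpace R) : \bar R :=
  ereal_sup [set (dist B x y)%:E | x in [set: B] & y in [set: B]].

Definition r_disjoint (R : realType) (X : metricSpace R) (r : R) (U : set (set X)) :=
  forall A A', U A -> U A' -> A <> A' ->
    forall x y, A x -> A' y -> r < dist X x y.

(* X -R-> Y : uniformly R-decomposable. The sequence R = (R_1, R_2, ...) is
   represented by Rs : nat -> R with R_(i+1) = Rs i (0-based indexing);
   the collections U_1..U_k are indexed by 'I_k. *)
Definition unif_decomposable (R : realType) (XX : mfamily R) (Rs : nat -> R)
    (YY : mfamily R) :=
  exists k : nat, forall X : metricSpace R, XX X ->
    exists U : 'I_k -> set (set X),
      (forall i A, U i A -> YY (subspace A)) /\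
      (forall i : 'I_k, r_disjoint (Rs i) (U i)) /\
      (forall x : X, exists i A, U i A /\ A x).

Definition bounded_family (R : realType) (BB : mfamily R) :=
  exists D : R, 0 < D /\ forall B, BB B -> (diam B < D%:E)%E.

Definition unif_APC (R : realType) (XX : mfamily R) :=
  forall Rs : nat -> R, exists YY : mfamily R,
    bounded_family YY /\ unif_decomposable XX Rs YY.

(* Main.v *)
Require Import Defs.
From mathcomp Require Import all_boot all_order all_algebra.
From mathcomp Require Import all_classical all_reals all_analysis.
Require Import Defs.
Import Order.TTheory GRing.Theory Num.Theory.
Local Open Scope classical_set_scope.
Local Open Scope ring_scope.

Definition sv (R : realType) (X : metricSpace R) (A : set X) (v : subspace A) : X :=
  proj1_sig v.
Arguments sv {R X A}.

Lemma diam_img_le (R : realType) (X : metricSpace R) (A : set X)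
  (V : set (subspace A)) :
  (diam (subspace [set sv v | v in V]) <= diam (subspace V))%E.
Proof.
apply: ereal_sup_le => z [x _ [y _ <-]].
case: x => x0 [v Vv ev]; case: y => y0 [w Vw ew].
exists (exist _ v Vv) => //; exists (exist _ w Vw) => //.
by rewrite /= /sub_dist /= /sub_dist -ev -ew.
Qed.

Arguments diam_img_le {R X A}.

Lemma le_sum_abs (R : realType) (f : nat -> R) n N : (n < N)%N ->
  f n <= \sum_(l < N) `|f l|.
Proof.
move=> nN; apply: le_trans (ler_norm _) _.
rewrite (bigD1 (Ordinal nN)) //= lerDl; exact: sumr_ge0.
Qed.

Theorem theorem1p5 (R : realType) (YY XX : mfamily R) :
  unif_APC YY ->
  (forall Rs : nat -> R, unif_decomposable XX Rs YY) ->
  unif_APC XX.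
Proof.
move=> HY HX Rs.
have [fZ HfZ] := choice HY.
have Hm : forall T : nat -> R, exists m : nat, forall Y, YY Y ->
    exists U : 'I_m -> set (set Y),
      (forall i A, U i A -> fZ T (subspace A)) /\
      (forall i : 'I_m, r_disjoint (T i) (U i)) /\
      (forall x : Y, exists i A, U i A /\ A x).
  by move=> T; have [_ [m Hm]] := HfZ T; exists m.
have [fm Hfm] := choice Hm.
have HD : forall T : nat -> R, exists D : R, 0 < D /\
    forall B, fZ T B -> (diam B < D%:E)%E.
  by move=> T; have [ [D HD] _] := HfZ T; exists D.
have [fD HfD] := choice HD.
pose M := fix M (i : nat) : nat :=
  if i is i'.+1 then (M i' + fm (fun j => Rs (M i' + j)%N))%N else 0%N.
pose T i := fun j => Rs (M i + j)%N.
pose m i := fm (T i).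
have MS : forall i, M i.+1 = (M i + m i)%N by [].
have Mmono : forall a b, (a <= b)%N -> (M a <= M b)%N.
  move=> a b /subnKC <-; elim: (b - a)%N => [|d IH]; first by rewrite addn0.
  by rewrite addnS MS; apply: leq_trans IH (leq_addr _ _).
have Minj : forall i i' j j', (M i + j = M i' + j')%N -> (j < m i)%N ->
    (j' < m i')%N -> i = i'.
  move=> i i' j j' E hj hj'.
  case: (ltngtP i i') => // hii.
    have : (M i + j < M i' + j')%N.
      apply: (leq_trans (n := M i.+1)); first by rewrite MS ltn_add2l.
      exact: leq_trans (Mmono _ _ hii) (leq_addr _ _).
    by rewrite E ltnn.
  have : (M i' + j' < M i + j)%N.
    apply: (leq_trans (n := M i'.+1)); first by rewrite MS ltn_add2l.
    exact: leq_trans (Mmono _ _ hii) (leq_addr _ _).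
  by rewrite E ltnn.
pose S i := \sum_(l < M i.+1) `|Rs l|.
have [k Hk] := HX S.
pose D := \sum_(i < k) fD (T i) + 1.
exists (fun B => (diam B < D%:E)%E); split.
  exists D; split => //; rewrite /D; apply: ltr_pwDr => //.
  by apply: sumr_ge0 => i _; have [/ltW] := HfD (T i).
exists (M k) => X XXX.
have [U [HU1 [HU2 HU3]]] := Hk X XXX.
pose Un i (A : set X) := exists o : 'I_k, val o = i /\ U o A.
have HV : forall i (A : set X), exists V : 'I_(m i) -> set (set (subspace A)),
    YY (subspace A) ->
      (forall o B, V o B -> fZ (T i) (subspace B)) /\
      (forall o : 'I_(m i), r_disjoint (T i o) (V o)) /\
      (forall x : subspace A, exists o B, V o B /\ B x).
  move=> i A; case: (pselect (YY (subspace A))) => hY.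
    have [V HV] := Hfm (T i) _ hY; by exists V.
  by exists (fun _ => set0).
pose VV i A := proj1_sig (cid (HV i A)).
have HVV : forall i A, YY (subspace A) -> _ := fun i A => proj2_sig (cid (HV i A)).
pose VVn i (A : set X) j (V : set (subspace A)) :=
  exists o : 'I_(m i), val o = j /\ VV i A o V.
pose W n := [set B : set X | exists i j (A : set X) (V : set (subspace A)),
  (M i + j)%N = n /\ Un i A /\ VVn i A j V /\ B = [set sv v | v in V]].
exists (fun n => W (val n)); split; [|split].
- move=> n B [i [j [A [V [E [ hU [ hV ->]]]]]]]; case: hU => o [oi UoA]; case: hV => p [pj VpV].
  subst i j.
  have [hZ _] := HVV o A (HU1 o A UoA).
  have [_ hd] := HfD (T o).
  apply: le_lt_trans (diam_img_le V) _.
  apply: lt_le_trans (hd _ (hZ p V VpV)) _.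
  rewrite lee_fin /D (bigD1 o) //= -addrA lerDl.
  apply: addr_ge0 => //; apply: sumr_ge0 => l _.
  by have [/ltW] := HfD (T l).
- move=> n B B' [i [j [A [V [E [ hU [ hV EB]]]]]]]; case: hU => o [oi UoA]; case: hV => p [pj VpV].
  move=> [i' [j' [A' [V' [E' [ hU' [ hV' EB']]]]]]]; case: hU' => o' [oi' UoA']; case: hV' => p' [pj' VpV'].
  move=> neq x y; rewrite EB EB' => -[v Vv <-] [w Vw <-].
  have hj : (j < m i)%N by rewrite -pj; exact: ltn_ord.
  have hj' : (j' < m i')%N by rewrite -pj'; exact: ltn_ord.
  have ii := Minj _ _ _ _ (etrans E (esym E')) hj hj'.
  move: oi'; rewrite -ii => oi'; subst i'; have jj : j = j' by apply/eqP; rewrite -(eqn_add2l (M i)) E E'.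
  move: pj'; rewrite -jj => pj'; subst j'.
  have oo : o = o' by apply: val_inj; rewrite oi oi'.
  subst o'.
  case: (pselect (A = A')) => hA.
    subst A'.
    have pp : p = p' by apply: val_inj; rewrite pj pj'.
    subst p'.
    have [_ [hd _]] := HVV i A (HU1 o A UoA).
    have hVV : V <> V' by move=> hV; apply: neq; rewrite EB EB' hV.
    have := hd p V V' VpV VpV' hVV v w Vv Vw.
    by rewrite /T pj E.
  have := HU2 o A A' UoA UoA' hA (sv v) (sv w) (proj2_sig v) (proj2_sig w).
  apply: le_lt_trans; rewrite /S oi; apply: le_sum_abs.
  by rewrite -E MS ltn_add2l.
- move=> x; have [q [A [UoA Ax]]] := HU3 x.
  have [_ [_ cov]] := HVV q A (HU1 q A UoA).
  have [p [V [VpV Vx]]] := cov (exist _ x Ax).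
  have hn : (M q + p < M k)%N.
    apply: (leq_trans (n := M q.+1)); first by rewrite MS ltn_add2l.
    exact: Mmono.
  exists (Ordinal hn), [set sv v | v in V]; split.
    exists (val q), (val p), A, V; split => //; split.
      by exists q.
    by split => //; exists p.
  by exists (exist _ x Ax).
Qed.
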